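(* Let $V$ be a finite nonempty set and $f:\{0,1\}^V\to\{0,1\}^V$ be non-expansive. Every subnetwork of $f$ has a unique fixed point if and only if $f$ has no circular subnetwork (i.e., no subnetwork that is positive-circular or negative-circular).
   Context: $d$ is the Hamming distance on $\{0,1\}^V$; $f$ is non-expansive if $d(f(x),f(y))\le d(x,y)$ for all $x,y$. For nonempty $I\subseteq V$ and $z\in\{0,1\}^{V\setminus I}$, the subnetwork of $f$ induced by $z$ is $h:\{0,1\}^I\to\{0,1\}^I$ with $h(x|_I)=f(x)|_I$ for all $x$ whose restriction to $V\setminus I$ is $z$ ($f$ is a subnetwork of itself). For a network $g$ on $W$ and $x^{j\alpha}$ the point equal to $x$ except its $j$-component is $\alpha$, the global interaction graph $G(g)$ is the signed digraph on $W$ with a positive (resp. negative) arc from $j$ to $i$ iff $g_i(x^{j1})-g_i(x^{j0})=1$ (resp. $=-1$) for at least one $x$. A cycle is a subgraph with at most one arc between any ordered pair of vertices whose underlying unsigned digraph is a directed cycle; positive (negative) if it has an even (odd) number of negative arcs. $g$ is positive-circular (negative-circular) if $G(g)$ itself is a positive (negative) cycle through all vertices of $W$. *)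

(* Defs.v *)
From mathcomp Require Import all_boot.
Set Implicit Arguments. Unset Strict Implicit. Unset Printing Implicit Defensive.

(* Configurations x in {0,1}^W, with 0 = false, 1 = true. *)
Definition config (W : finType) := {ffun W -> bool}.

Definition network (W : finType) := config W -> config W.

Definition hamming (W : finType) (x y : config W) : nat :=
  #|[set v | x v != y v]|.

Definition non_expansive (W : finType) (f : network W) : Prop :=
  forall x y, hamming (f x) (f y) <= hamming x y.

Definition upd (W : finType) (x : config W) (j : W) (a : bool) : config W :=
  [ffun k => if k == j then a else x k].

(* Subnetwork of f on I induced by z: only the values of z outside I matter,
   so z : config V represents an element of {0,1}^(V \ I). *)
Definition subnet (V : finType) (f : network V) (I : {set V}) (z : config V)
  : network {v : V | v \in I} :=
  fun x => [ffun i : {v : V | v \in I} =>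
    f [ffun v => if (insub v : option {v : V | v \in I}) is Some w
                 then x w else z v] (val i)].

Definition pos_arc (W : finType) (g : network W) (j i : W) : Prop :=
  exists x, g (upd x j true) i = true /\ g (upd x j false) i = false.
Definition neg_arc (W : finType) (g : network W) (j i : W) : Prop :=
  exists x, g (upd x j true) i = false /\ g (upd x j false) i = true.

(* G(g) itself is a cycle through all vertices of W: the arc set is exactly
   {j -> s j} for a successor map s whose single orbit is all of W, with at most
   one (signed) arc per ordered pair. *)
Definition circular_with (W : finType) (g : network W) (even_neg : bool) : Prop :=
  exists s : W -> W,
    (forall j i, (pos_arc g j i \/ neg_arc g j i) <-> i = s j) /\
    (forall j i, fconnect s j i) /\
    (forall j, ~ (pos_arc g j (s j) /\ neg_arc g j (s j))) /\
    exists N : {set W},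
      (forall j, j \in N <-> neg_arc g j (s j)) /\ ~~ odd #|N| = even_neg.

Definition positive_circular (W : finType) (g : network W) : Prop :=
  circular_with g true.
Definition negative_circular (W : finType) (g : network W) : Prop :=
  circular_with g false.

Definition is_fixed (W : finType) (g : network W) (x : config W) : Prop := g x = x.

Arguments subnet [V] f I z _.

(* Main.v *)
Require Import Defs.
From mathcomp Require Import all_boot zify.
From Stdlib Require Import Classical.
Set Implicit Arguments. Unset Strict Implicit. Unset Printing Implicit Defensive.


Definition flip (W : finType) (u : config W) (S : {set W}) : config W :=
  [ffun v => u v (+) (v \in S)].
Definition negc (W : finType) (u : config W) := flip u setT.

Lemma flipK (W : finType) (u : config W) S : flip (flip u S) S = u.
Proof. by apply/ffunP => v; rewrite !ffunE -addbA addbb addbF. Qed.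

Lemma flip0 (W : finType) (u : config W) : flip u set0 = u.
Proof. by apply/ffunP => v; rewrite !ffunE in_set0 addbF. Qed.

Lemma flipD (W : finType) (a u : config W) : a = flip u [set v | a v != u v].
Proof. by apply/ffunP => v; rewrite !ffunE inE; case: (a v); case: (u v). Qed.

Lemma hamming_flip (W : finType) (a b : config W) S :
  hamming (flip a S) (flip b S) = hamming a b.
Proof.
rewrite /hamming; apply: eq_card => v; rewrite !inE !ffunE.
by case: (a v); case: (b v); case: (v \in S).
Qed.

Lemma hammingC (W : finType) (a b : config W) : hamming a b = hamming b a.
Proof. by rewrite /hamming; apply: eq_card => v; rewrite !inE eq_sym. Qed.

Lemma hamming_neg (W : finType) (a u : config W) :
  hamming a (negc u) + hamming a u = #|W|.
Proof.
rewrite /hamming -(cardsC [set v | a v != u v]) addnC; congr (_ + _).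
apply: eq_card => v; rewrite !inE !ffunE inE.
by case: (a v); case: (u v).
Qed.

Lemma hamming_flip1a (W : finType) (a u : config W) s :
  a s != u s -> (hamming a (flip u [set s])).+1 = hamming a u.
Proof.
move=> Hs; rewrite /hamming (cardsD1 s [set v | a v != u v]) inE Hs /=.
congr (_.+1); apply: eq_card => v; rewrite !inE !ffunE inE.
case: (eqVneq v s) => [->|]; first by move: Hs; case: (a s); case: (u s).
by rewrite addbF.
Qed.

Lemma hamming_flip1b (W : finType) (a u : config W) s :
  a s = u s -> hamming a (flip u [set s]) = (hamming a u).+1.
Proof.
move=> Hs; rewrite /hamming.
have -> : [set v | a v != flip u [set s] v] = s |: [set v | a v != u v].
  apply/setP => v; rewrite !inE !ffunE inE.
  case: (eqVneq v s) => [->|]; first by rewrite Hs; case: (u s).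
  by rewrite addbF.
by rewrite cardsU1 inE Hs eqxx.
Qed.

Lemma odd_card_big (W : finType) (P : pred W) :
  odd #|[set j | P j]| = \big[addb/false]_(j : W) P j.
Proof.
rewrite -sum1dep_card (big_morph odd oddD (erefl : odd 0 = false)) big_mkcond /=.
by apply: eq_bigr => j _; case: (P j).
Qed.

Lemma parity (W : finType) (s : W -> W) (x b : W -> bool) :
  injective s ->
  odd #|[set j | x (s j) (+) x j (+) b j]| = odd #|[set j | b j]|.
Proof.
move=> Hs; rewrite !odd_card_big !big_split /=.
have -> : \big[addb/false]_(j : W) x (s j) = \big[addb/false]_(j : W) x j.
  by symmetry; exact: (reindex_inj Hs).
by rewrite addbb.
Qed.

Lemma upd_id (W : finType) (x : config W) k : upd x k (x k) = x.
Proof. by apply/ffunP => v; rewrite ffunE; case: eqP => [->|]. Qed.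

Lemma upd_flip (W : finType) (x : config W) k : upd x k (~~ x k) = flip x [set k].
Proof. by apply/ffunP => v; rewrite !ffunE inE; case: eqP => [->|]; rewrite ?addbT ?addbF. Qed.

Lemma no_arc_upd (W : finType) (h : network W) k i :
  ~ pos_arc h k i -> ~ neg_arc h k i -> forall x b, h (upd x k b) i = h x i.
Proof.
move=> Hp Hn x b; rewrite -{2}(upd_id x k).
have E : h (upd x k true) i = h (upd x k false) i.
  case E1: (h (upd x k true) i); case E2: (h (upd x k false) i) => //.
  - by case: Hp; exists x.
  - by case: Hn; exists x.
by case: b; case: (x k).
Qed.

Lemma dep1 (W : finType) (h : network W) j i :
  (forall k, k != j -> ~ pos_arc h k i /\ ~ neg_arc h k i) ->
  forall x y : config W, x j = y j -> h x i = h y i.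
Proof.
move=> Hk x y Hxy.
move: {2}(hamming x y) (leqnn (hamming x y)) => n; elim: n x Hxy => [|n IH] x Hxy Hn.
  have -> // : x = y.
  apply/ffunP => v; apply/eqP; apply: contraT => Hv.
  move: Hn; rewrite leqn0 /hamming; move/eqP/cards0_eq/setP/(_ v); by rewrite !inE Hv.
case: (eqVneq x y) => [->//|/eqP Hne].
have [k Hk2] : exists k, x k != y k.
  apply/existsP; apply: contraT; rewrite negb_exists => /forallP H.
  by case: Hne; apply/ffunP => v; move: (H v); rewrite negbK => /eqP.
have kj : k != j by apply: contraNneq Hk2 => ->; rewrite Hxy.
case: (Hk k kj) => Hp Hn'.
rewrite -(no_arc_upd Hp Hn' x (~~ x k)) upd_flip.
apply: IH.
  by rewrite !ffunE inE eq_sym (negbTE kj) addbF.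
have := hamming_flip1a (a := y) (u := x) (s := k); rewrite eq_sym => /(_ Hk2).
rewrite (hammingC y) (hammingC y) => E. by rewrite -ltnS E.
Qed.

Lemma surj_inj (W : finType) (s : W -> W) : (forall i, exists j, i = s j) -> injective s.
Proof.
move=> Hs.
pose g i := odflt i [pick j | s j == i].
have gK : cancel g s.
  move=> i; rewrite /g; case: pickP => [j /eqP //|H].
  by have [j Hj] := Hs i; move: (H j); rewrite -Hj eqxx.
have gi : injective g := can_inj gK.
have bg := injF_bij gi.
exact: (can_inj ((bij_can_sym bg s).2 gK)).
Qed.

Lemma fconn_surj (W : finType) (s : W -> W) :
  (forall j i, fconnect s j i) -> forall i, exists j, i = s j.
Proof.
move=> H i; exists (iter (findex s (s i) i) s i).
by rewrite -iterS iterSr iter_findex.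
Qed.

Lemma circ_struct (W : finType) (h : network W) e :
  circular_with h e ->
  exists s (N : {set W}), injective s /\ (forall i, exists j, i = s j) /\
    (forall z j, h z (s j) = z j (+) (j \in N)) /\ ~~ odd #|N| = e.
Proof.
case=> s [Harc [Hconn [Hnb [N [HN Hpar]]]]].
have Hsurj := fconn_surj Hconn; have Hinj := surj_inj Hsurj.
exists s, N; do 3 (split => //).
move=> z j.
have Hdep : forall x y : config W, x j = y j -> h x (s j) = h y (s j).
  apply: dep1 => k kj; split => Ha.
    by move/(_ k (s j)): Harc => [/(_ (or_introl Ha)) /Hinj E _]; rewrite E eqxx in kj.
  by move/(_ k (s j)): Harc => [/(_ (or_intror Ha)) /Hinj E _]; rewrite E eqxx in kj.
have Hupd : forall x b, h (upd x j b) (s j) = h (upd z j b) (s j).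
  by move=> x b; apply: Hdep; rewrite !ffunE eqxx.
rewrite -{1}(upd_id z j).
have [Hp|Hn] : pos_arc h j (s j) \/ neg_arc h j (s j) by apply/Harc.
- have jN : j \notin N by apply/negP => /HN Hn; apply: (Hnb j).
  rewrite (negbTE jN) addbF.
  case: Hp => x [H1 H2]; move: H1 H2; rewrite !Hupd.
  by case: (z j) => H1 H2; rewrite ?H1 ?H2.
- have jN : j \in N by apply/HN.
  rewrite jN addbT.
  case: Hn => x [H1 H2]; move: H1 H2; rewrite !Hupd.
  by case: (z j) => H1 H2; rewrite ?H1 ?H2.
Qed.

Lemma circ_nounique (W : finType) (h : network W) e :
  0 < #|W| -> circular_with h e -> ~ exists! x, is_fixed h x.
Proof.
move=> /card_gt0P [w0 _] /circ_struct [s [N [Hinj [Hsurj [Hf Hpar]]]]] [x [Hx Hu]].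
rewrite /is_fixed in Hx Hu.
have Hxs : forall j, x (s j) = x j (+) (j \in N).
  by move=> j; rewrite -{1}Hx Hf.
case: e Hpar => Hpar.
- have Hn : h (negc x) = negc x.
    apply/ffunP => i; have [j ->] := Hsurj i.
    by rewrite Hf !ffunE !in_setT !addbT Hxs addNb.
  move: (Hu _ Hn) => /ffunP /(_ w0); rewrite !ffunE in_setT addbT.
  by case: (x w0).
- have := parity x (fun j => j \in N) Hinj.
  have -> : [set j | x (s j) (+) x j (+) (j \in N)] = set0.
    by apply/setP => j; rewrite !inE Hxs; case: (x j); case: (j \in N).
  rewrite cards0 /=.
  have -> : [set j | j \in N] = N by apply/setP => j; rewrite inE.
  by move: Hpar; case: (odd #|N|).
Qed.

Definition Pu (W : finType) (h : network W) (E : {set W}) (y : config W) :=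
  exists! x : config W, (forall v, v \notin E -> x v = y v) /\
                        (forall v, v \in E -> h x v = x v).

Lemma mk_circ (W : finType) (h : network W) (s : W -> W) (b : W -> bool) :
  injective s -> (forall j i, fconnect s j i) ->
  (forall z j, h z (s j) = z j (+) b j) ->
  circular_with h (~~ odd #|[set j | b j]|).
Proof.
move=> Hinj Hconn Hf.
have Hsurj := fconn_surj Hconn.
pose x0 : config W := [ffun _ => false].
have Hu : forall x j c, h (upd x j c) (s j) = c (+) b j.
  by move=> x j c; rewrite Hf ffunE eqxx.
exists s; split; [|split; [by []|split]].
- move=> j i; split.
    have [m ->] := Hsurj i.
    case: (eqVneq m j) => [-> //|mj].
    by case=> [] [x]; rewrite !Hf !ffunE (negbTE mj); case: (x m); case: (b m); case.
  move=> ->; case E: (b j).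
    by right; exists x0; rewrite !Hu E.
  by left; exists x0; rewrite !Hu E.
- move=> j [[x [H1 _]] [y [H2 _]]]; move: H1 H2; rewrite !Hu.
  by case: (b j).
- exists [set j | b j]; split => //.
  move=> j; rewrite inE; split.
    by move=> E; exists x0; rewrite !Hu E.
  by case=> x [H1 _]; move: H1; rewrite Hu; case: (b j).
Qed.

Lemma two_pts (W : finType) (h : network W) E (p q : config W) Cc :
  Pu h E p -> h p = flip p Cc -> h q = flip q Cc ->
  (forall v, v \in E -> v \notin Cc) -> (forall v, v \notin E -> p v = q v) ->
  (exists v, v \in E /\ p v != q v) -> False.
Proof.
move=> [x [_ Hx]] Hp Hq HE Hout [v [vE Hv]].
have Hfix : forall r : config W, h r = flip r Cc -> forall v, v \in E -> h r v = r v.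
  by move=> r -> w wE; rewrite ffunE (negbTE (HE w wE)) addbF.
have e1 := Hx p (conj (fun _ _ => erefl) (Hfix p Hp)).
have e2 := Hx q (conj (fun w wE => esym (Hout w wE)) (Hfix q Hq)).
by move: Hv; rewrite -e1 -e2 eqxx.
Qed.

Lemma key (W : finType) (h : network W) (u : config W) (Cc : {set W}) :
  0 < #|W| ->
  non_expansive h ->
  (forall E y, E != set0 -> E != setT -> Pu h E y) ->
  (Cc = set0 \/ exists i, Cc = [set i]) ->
  h u = flip u Cc -> h (negc u) = flip (negc u) Cc ->
  circular_with h (~~ odd #|Cc|).
Proof.
move=> /card_gt0P [w0 _] Hne HP HC hu hnu.
pose k z := flip (h z) Cc.
have kne : forall a b, hamming (k a) (k b) <= hamming a b.
  by move=> a b; rewrite /k hamming_flip.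
have ku : k u = u by rewrite /k hu flipK.
have knu : k (negc u) = negc u by rewrite /k hnu flipK.
have hk : forall z, h z = flip (k z) Cc by move=> z; rewrite /k flipK.
pose D (a : config W) := [set v | a v != u v].
have kD : forall z, #|D (k z)| = #|D z|.
  move=> z.
  have h1 := kne z u; rewrite ku in h1.
  have h2 := kne z (negc u); rewrite knu in h2.
  have e1 := hamming_neg (k z) u; have e2 := hamming_neg z u.
  rewrite /D -!/(hamming _ u); lia.
have Dflip : forall S, D (flip u S) = S.
  by move=> S; apply/setP => v; rewrite inE ffunE; case: (u v); case: (v \in S).
have Hs : forall j, #|D (k (flip u [set j]))| == 1 by move=> j; rewrite kD Dflip cards1.
pose σ j := odflt j [pick v in D (k (flip u [set j]))].
have Hσ : forall j, D (k (flip u [set j])) = [set σ j].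
  move=> j; have [s Es] := cards1P (Hs j).
  by rewrite /σ Es; case: pickP => [v|/(_ s)]; rewrite ?inE ?eqxx //= => /eqP ->.
have kσ : forall j, k (flip u [set j]) = flip u [set σ j].
  by move=> j; rewrite {1}(flipD (k (flip u [set j])) u) -/(D _) Hσ.
have incl : forall z j, j \in D z -> σ j \in D (k z).
  move=> z j Hj; apply: contraT => Hn.
  have H := kne z (flip u [set j]); rewrite kσ in H.
  have Hn' : k z (σ j) = u (σ j) by move: Hn; rewrite inE negbK => /eqP.
  have a1 := hamming_flip1b Hn'.
  have a2 : z j != u j by move: Hj; rewrite inE.
  have a3 := hamming_flip1a a2.
  have a4 : hamming (k z) u = hamming z u := kD z.
  lia.
have closedF : forall C, C != set0 -> C != setT -> σ @: C = C -> False.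
  move=> C Cn CT Cc'.
  pose q := flip u C.
  have kq : k q = q.
    have : D (k q) = C.
      apply/eqP; rewrite eq_sym eqEcard kD /q Dflip leqnn andbT.
      apply/subsetP => v; rewrite -{1}Cc' => /imsetP [j jC ->].
      by apply: incl; rewrite Dflip.
    by move=> E; rewrite (flipD (k q) u) -/(D _) E.
  have hq : h q = flip q Cc by rewrite hk kq.
  have [v0 v0C] := set0Pn _ Cn.
  have [E0 | [i Ei]] := HC.
  - apply: (@two_pts W h C u q Cc).
    + by apply: HP.
    + by rewrite hu.
    + by rewrite hq.
    + by move=> v _; rewrite E0 in_set0.
    + by move=> v vC; rewrite /q ffunE (negbTE vC) addbF.
    + by exists v0; rewrite /q ffunE v0C addbT; case: (u v0).
  case: (boolP (i \in C)) => iC.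
  - have CTn : ~: C != set0.
      apply: contraNneq CT => H; by rewrite -(setCK C) H setC0.
    have [v1 v1C] := set0Pn _ CTn.
    apply: (@two_pts W h (~: C) (negc u) q Cc).
    + apply: HP => //; apply: contraNneq Cn => H; by rewrite -(setCK C) H setCT.
    + by rewrite hnu.
    + by rewrite hq.
    + move=> v; rewrite Ei !inE; apply: contraNneq => ->; by [].
    + by move=> v; rewrite inE negbK => vC; rewrite /q !ffunE vC in_setT.
    + exists v1; split => //; move: v1C; rewrite inE => v1C.
      by rewrite /q !ffunE (negbTE v1C) in_setT addbF; case: (u v1).
  - apply: (@two_pts W h C u q Cc).
    + by apply: HP.
    + by rewrite hu.
    + by rewrite hq.
    + by move=> v vC; rewrite Ei inE; apply: contraNneq iC => <-.
    + by move=> v vC; rewrite /q ffunE (negbTE vC) addbF.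
    + by exists v0; rewrite /q ffunE v0C addbT; case: (u v0).
have HT : (setT != set0 :> {set W}) && (σ @: setT \subset setT).
  by rewrite subsetT andbT; apply/set0Pn; exists w0.
case: (@arg_minnP _ setT (fun C : {set W} => (C != set0) && (σ @: C \subset C)) (fun C : {set W} => #|C|) HT) => C0 /andP [C0n C0c] Hmin.
have C0e : σ @: C0 = C0.
  apply/eqP; rewrite eqEcard C0c /=; apply: Hmin.
  by rewrite imset_eq0 C0n /=; apply: imsetS.
have C0T : C0 = setT.
  by apply/eqP; apply: contraT => CT; case: (closedF C0 C0n CT C0e).
have allT : forall D', D' != set0 -> σ @: D' \subset D' -> D' = setT.
  move=> D' Dn Dc; apply/eqP; rewrite eqEcard subsetT /= cardsT.
  by have := Hmin D' (introT andP (conj Dn Dc)); rewrite C0T cardsT.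
have Hsurj : forall i, exists j, i = σ j.
  move=> i.
  have : σ @: setT = setT by apply: allT; [rewrite imset_eq0; apply/set0Pn; exists w0|apply: imsetS; apply: subsetT].
  move/setP/(_ i); rewrite in_setT => /imsetP [j _ ->]; by exists j.
have Hinj := surj_inj Hsurj.
have Hconn : forall j i, fconnect σ j i.
  move=> j i.
  have : [set i | fconnect σ j i] = setT.
    apply: allT; first by apply/set0Pn; exists j; rewrite inE connect0.
    apply/subsetP => v /imsetP [x]; rewrite inE => Hx ->.
    by rewrite inE (connect_trans Hx (fconnect1 _ _)).
  by move/setP/(_ i); rewrite !inE.
have Hf : forall z j, h z (σ j) = z j (+) (u (σ j) (+) u j (+) (σ j \in Cc)).
  move=> z j.
  have E : σ @: D z = D (k z).
    apply/eqP; rewrite eqEcard card_imset // kD leqnn andbT.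
    by apply/subsetP => v /imsetP [x Hx ->]; apply: incl.
  have H : (σ j \in D (k z)) = (j \in D z) by rewrite -E mem_imset.
  rewrite hk ffunE; move: H; rewrite !inE; move: (k z (σ j)) => b.
  by case: b; case: (z j); case: (u j); case: (u (σ j)); case: (σ j \in Cc).
have := mk_circ Hinj Hconn Hf.
rewrite parity //.
have -> : [set j | σ j \in Cc] = σ @^-1: Cc by [].
by rewrite card_preimset.
Qed.

Lemma ldist (W : finType) (h : network W) (a b : config W) i j :
  non_expansive h -> h a = flip a [set i] -> h b = flip b [set j] ->
  i != j -> a j = b j -> a i != b i.
Proof.
move=> Hne ha hb ij abj; apply/negP => /eqP abi.
have := Hne a b; rewrite ha hb /hamming.
set D := [set v | a v != b v].
have iD : i \notin D by rewrite inE abi eqxx.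
have sub : i |: D \subset [set v | flip a [set i] v != flip b [set j] v].
  apply/subsetP => v; rewrite !inE !ffunE !inE.
  case/orP => [/eqP ->|Hv]; first by rewrite eqxx (negbTE ij) addbF abi; case: (b i).
  have vi : v != i by apply: contraNneq Hv => ->; rewrite abi.
  have vj : v != j by apply: contraNneq Hv => ->; rewrite abj.
  by rewrite (negbTE vi) (negbTE vj) !addbF.
have := subset_leq_card sub; rewrite cardsU1 iD /=.
lia.
Qed.

Lemma main (W : finType) (h : network W) :
  0 < #|W| -> non_expansive h ->
  (forall E y, E != set0 -> E != setT -> Pu h E y) ->
  ~ (positive_circular h \/ negative_circular h) ->
  exists! x, is_fixed h x.
Proof.
move=> HW Hne HP Hnc.
have Ex : forall i a, exists x : config W, x i = a /\ forall j, j != i -> h x j = x j.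
  move=> i a; case: (eqVneq [set~ i] set0) => E0.
    exists [ffun _ => a]; split; first by rewrite ffunE.
    by move=> j ji; move/setP/(_ j): E0; rewrite in_setC1 ji in_set0.
  have ET : [set~ i] != setT.
    by apply/negP => /eqP/setP/(_ i); rewrite in_setC1 eqxx in_setT.
  have [x [[Ho Hi] _]] := HP _ [ffun _ => a] E0 ET.
  exists x; split.
    by rewrite Ho ?ffunE // in_setC1 negbK.
  by move=> j ji; apply: Hi; rewrite in_setC1.
have Uq : forall i (x y : config W), x i = y i ->
    (forall j, j != i -> h x j = x j) -> (forall j, j != i -> h y j = y j) -> x = y.
  move=> i x y xy Hx Hy; case: (eqVneq [set~ i] set0) => E0.
    apply/ffunP => j; case: (eqVneq j i) => [-> //|ji].
    by move/setP/(_ j): E0; rewrite in_setC1 ji in_set0.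
  have ET : [set~ i] != setT.
    by apply/negP => /eqP/setP/(_ i); rewrite in_setC1 eqxx in_setT.
  have [z [_ Hz]] := HP _ x E0 ET.
  have e1 : z = x.
    by apply: Hz; split => // j; rewrite in_setC1; apply: Hx.
  have e2 : z = y.
    apply: Hz; split; last by move=> j; rewrite in_setC1; apply: Hy.
    by move=> v; rewrite in_setC1 negbK => /eqP ->.
  by rewrite -e1 e2.
have nf : forall i (x : config W), (forall j, j != i -> h x j = x j) -> h x <> x ->
    h x = flip x [set i].
  move=> i x Hx Hnx; apply/ffunP => v; rewrite ffunE inE.
  case: (eqVneq v i) => [->|vi]; last by rewrite addbF Hx.
  rewrite addbT; case E: (h x i == x i).
    by case: Hnx; apply/ffunP => v'; case: (eqVneq v' i) => [->|vi']; [apply/eqP|apply: Hx].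
  by move/negbT: E; case: (h x i); case: (x i).
case: (classic (exists! x, is_fixed h x)) => // Hnu; exfalso; apply: Hnc.
case: (classic (exists x, h x = x)) => [[x Hx]|Hnf].
- have [y [Hy Hyx]] : exists y, h y = y /\ y <> x.
    apply: NNPP => H; apply: Hnu; exists x; split => // y Hy.
    by apply: NNPP => Hne'; apply: H; exists y; split => // E; apply: Hne'.
  have Hyn : y = negc x.
    apply/ffunP => v; rewrite !ffunE in_setT addbT.
    case E: (y v == x v).
      case: Hyx; apply: (Uq v); first by apply/eqP.
        by move=> j _; rewrite Hy.
      by move=> j _; rewrite Hx.
    by move/negbT: E; case: (y v); case: (x v).
  left; have := key (u := x) (Cc := set0) HW Hne HP (or_introl erefl).
  by rewrite cards0 !flip0 Hx -Hyn Hy => /(_ erefl erefl).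
- have [w0 _] := card_gt0P HW.
  have [u [u0 Hu]] := Ex w0 false.
  have [w [w1 Hw]] := Ex w0 true.
  have nfx : forall x : config W, h x <> x by move=> x Hx; apply: Hnf; exists x.
  have hu := nf _ _ Hu (nfx u).
  have hw := nf _ _ Hw (nfx w).
  have wn : w = negc u.
    apply/ffunP => j; rewrite !ffunE in_setT addbT.
    case: (eqVneq j w0) => [->|jw]; first by rewrite u0 w1.
    case E: (w j == u j); last by move/negbT: E; case: (w j); case: (u j).
    move/eqP: E => E.
    have [p [pj Hp]] := Ex j (u j).
    have hp := nf _ _ Hp (nfx p).
    have wj := ldist Hne hu hp ltac:(by rewrite eq_sym) (esym pj).
    have wj' := ldist Hne hw hp ltac:(by rewrite eq_sym) ltac:(by rewrite pj E).
    by move: wj wj'; rewrite u0 w1; case: (p w0).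
  right; have := key (u := u) (Cc := [set w0]) HW Hne HP (or_intror (ex_intro _ w0 erefl)).
  by rewrite cards1 -wn => /(_ hu hw).
Qed.

Definition ext (V : finType) (I : {set V}) (x : config {v : V | v \in I}) (z : config V)
  : config V := [ffun v => if (insub v : option {v : V | v \in I}) is Some w then x w else z v].
Definition res (V : finType) (I : {set V}) (X : config V) : config {v : V | v \in I} :=
  [ffun w => X (val w)].

Lemma subnetE (V : finType) (f : network V) I z x : subnet f I z x = res I (f (ext x z)).
Proof. by apply/ffunP => w; rewrite !ffunE. Qed.

Lemma ext_val (V : finType) (I : {set V}) (x : config {v : V | v \in I}) z w :
  ext x z (val w) = x w.
Proof. by rewrite ffunE valK. Qed.

Lemma ext_out (V : finType) (I : {set V}) (x : config {v : V | v \in I}) z v :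
  v \notin I -> ext x z v = z v.
Proof. by move=> H; rewrite ffunE insubN. Qed.

Lemma res_ext (V : finType) (I : {set V}) (x : config {v : V | v \in I}) z :
  res I (ext x z) = x.
Proof. by apply/ffunP => w; rewrite ffunE ext_val. Qed.

Lemma ext_res (V : finType) (I : {set V}) (X z : config V) :
  (forall v, v \notin I -> X v = z v) -> ext (res I X) z = X.
Proof.
move=> H; apply/ffunP => v; rewrite ffunE.
case: insubP => [w _ <-|Hv]; first by rewrite ffunE.
by rewrite H.
Qed.

Lemma T2 (V : finType) (f : network V) (I : {set V}) (z : config V)
  (E : {set {v : V | v \in I}}) (y : config {v : V | v \in I}) :
  Pu (subnet f I z) E y <-> Pu f (val @: E) (ext y z).
Proof.
have valE : forall w, (val w \in val @: E) = (w \in E) by move=> w; rewrite mem_imset //; apply: val_inj.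
have imI : forall v, v \in val @: E -> v \in I by move=> v /imsetP [w _ ->]; apply: valP.
pose cS (x : config {v : V | v \in I}) := (forall w, w \notin E -> x w = y w) /\
  (forall w, w \in E -> subnet f I z x w = x w).
pose cF (X : config V) := (forall v, v \notin val @: E -> X v = ext y z v) /\
  (forall v, v \in val @: E -> f X v = X v).
have A : forall x, cS x -> cF (ext x z).
  move=> x [H1 H2]; split.
    move=> v; case: (insubP {v : V | v \in I} v) => [w _ <-|Hv] Hn.
      by rewrite !ext_val H1 // -valE.
    by rewrite !ext_out.
  move=> v /imsetP [w wE ->]; by rewrite ext_val -(H2 w wE) subnetE ffunE.
have B : forall X, cF X -> cS (res I X) /\ ext (res I X) z = X.
  move=> X [H1 H2].
  have e : ext (res I X) z = X.
    apply: ext_res => v vI; rewrite H1 ?ext_out //.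
    by apply: contraNN vI; apply: imI.
  split => //; split.
    by move=> w wE; rewrite ffunE H1 ?ext_val // valE.
  by move=> w wE; rewrite subnetE !ffunE e H2 // valE.
split.
- case=> x0 [Hx0 U]; exists (ext x0 z); split; first exact: A.
  move=> X HX; have [HB e] := B X HX.
  by rewrite -e (U _ HB).
- case=> X0 [HX0 U]; exists (res I X0); split; first by case: (B X0 HX0).
  move=> x Hx; by rewrite (U _ (A x Hx)) res_ext.
Qed.

Lemma Pu_ext (W : finType) (h : network W) (E : {set W}) (y y' : config W) :
  (forall v, v \notin E -> y v = y' v) -> Pu h E y -> Pu h E y'.
Proof.
move=> Hy [x [[H1 H2] U]]; exists x; split.
  by split => // v vE; rewrite H1 // Hy.
by move=> x' [H1' H2']; apply: U; split => // v vE; rewrite H1' // Hy.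
Qed.

Lemma Pu_fix (W : finType) (h : network W) y :
  (exists! x, is_fixed h x) <-> Pu h setT y.
Proof.
split.
- case=> x [Hx U]; exists x; split.
    by split => [v|v _]; [rewrite in_setT | rewrite Hx].
  by move=> x' [_ H]; apply: U; apply/ffunP => v; apply: H; rewrite in_setT.
- case=> x [[_ Hx] U]; exists x; split.
    by apply/ffunP => v; apply: Hx; rewrite in_setT.
  by move=> x' Hx'; apply: U; split => [v|v _]; [rewrite in_setT | rewrite Hx'].
Qed.

Lemma T1 (V : finType) (f : network V) (I : {set V}) (z : config V) :
  (exists! x, is_fixed (subnet f I z) x) <-> Pu f I z.
Proof.
pose y0 : config {v : V | v \in I} := [ffun _ => false].
have eI : val @: [set: {v : V | v \in I}] = I.
  apply/setP => v; apply/imsetP/idP => [[w _ ->]|vI]; first exact: valP.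
  by exists (Sub v vI).
rewrite (Pu_fix _ y0) T2 eI.
split; apply: Pu_ext => v vI; rewrite ext_out //.
Qed.

Lemma NE (V : finType) (f : network V) (I : {set V}) (z : config V) :
  non_expansive f -> non_expansive (subnet f I z).
Proof.
move=> Hf x y.
have cv : forall (P : pred V), #|[set w : {v : V | v \in I} | P (val w)]| <= #|[set v | P v]|.
  move=> P; rewrite -(card_imset _ val_inj); apply: subset_leq_card.
  by apply/subsetP => v /imsetP [w]; rewrite !inE => Hw ->.
have e : #|[set v | ext x z v != ext y z v]| = hamming x y.
  rewrite /hamming -(card_imset _ val_inj); apply: eq_card => v.
  rewrite inE; case: (insubP {v : V | v \in I} v) => [w _ <-|Hv].
    by rewrite mem_imset ?inE ?ext_val //; apply: val_inj.
  rewrite !ext_out // eqxx; apply/esym/negbTE; apply: contraNN Hv.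
  by move=> /imsetP [w _ ->]; apply: valP.
rewrite /hamming !subnetE.
have H1 := cv (fun v => f (ext x z) v != f (ext y z) v).
have H2 := Hf (ext x z) (ext y z).
rewrite /hamming in H2.
have -> : [set v | res I (f (ext x z)) v != res I (f (ext y z)) v] =
          [set w : {v : V | v \in I} | f (ext x z) (val w) != f (ext y z) (val w)].
  by apply/setP => w; rewrite !inE !ffunE.
apply: (leq_trans H1); apply: (leq_trans H2); rewrite e; exact: leqnn.
Qed.

Lemma card_subW (V : finType) (I : {set V}) : #|{: {v : V | v \in I}}| = #|I|.
Proof. by rewrite card_sig; apply: eq_card => v; rewrite inE. Qed.

Unset Implicit Arguments.
Theorem corollary6 (V : finType) (f : network V) :
  0 < #|V| ->
  non_expansive f ->
  ((forall (I : {set V}) (z : config V), I != set0 ->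
      exists! x, is_fixed (subnet f I z) x)
   <->
   ~ (exists (I : {set V}) (z : config V), I != set0 /\
        (positive_circular (subnet f I z) \/ negative_circular (subnet f I z)))).
Proof.
move=> HV Hf; split.
- move=> H [I [z [In Hc]]].
  have HW : 0 < #|{: {v : V | v \in I}}| by rewrite card_subW card_gt0.
  have := H I z In.
  by case: Hc; apply: circ_nounique.
- move=> Hnc.
  have claim : forall n (I : {set V}), #|I| <= n -> I != set0 -> forall z, Pu f I z.
    elim=> [|n IH] I HI In z.
      by move: In; rewrite -card_gt0; case: #|I| HI.
    apply/T1; apply: main.
    + by rewrite card_subW card_gt0.
    + exact: NE.
    + move=> E y En ET; apply/T2; apply: IH.
      * rewrite card_imset; last exact: val_inj.
        have Hp : E \proper setT by rewrite properT.
        have := proper_card Hp.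
        rewrite cardsT card_subW => H; rewrite -ltnS; exact: leq_trans H HI.
      * by rewrite imset_eq0.
    + by move=> Hc; apply: Hnc; exists I, z.
  by move=> I z In; apply/T1; apply: (claim #|I|).
Qed.
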